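(* Let $\gamma>0$, $c_u>0$, $c_a>0$, $c_s>0$ and $R^*=\log\left(\frac{c_u}{c_a}+1\right)$. The bi-level game described in the context admits a unique bi-level game Nash equilibrium $(p_u^*,p_a^*,\{s^*,T^*\})$, namely $$(p_u^*,p_a^*,\{s^*,T^*\})=\left(0,\,0,\,\left\{1,\ \log\left(\tfrac{c_u}{c_a}+1\right)\right\}\right).$$
   Context: $\log$ is the natural logarithm. Lower level: given a coverage level $s\in[0,1]$, a user chooses $p_u\in[0,1]$ and an attacker $p_a\in[0,1]$ in a zero-sum game with objective $K(p_u,p_a,s)=\gamma(1-s)\log\left(\frac{p_a}{p_u}+1\right)+c_up_u-c_ap_a$ (user minimizes, attacker maximizes) on the feasible set $\mathcal{S}_{u,a}(s)=\{(p_u,p_a)\in[0,1]^2:1-\gamma(1-s)\log(p_a/p_u+1)>0\}$. Conventions: when $s=1$ the term $\gamma(1-s)\log(p_a/p_u+1)$ is taken to be $0$ (all pairs feasible); when $s<1$, pairs with $p_u=0$ are regarded infeasible. A pair $(p_u^*,p_a^* )\in\mathcal{S}_{u,a}(s)$ is a saddle-point equilibrium (SPE) if $K(p_u^*,p_a,s)\le K(p_u^*,p_a^*,s)\le K(p_u,p_a^*,s)$ for all $p_a$ with $(p_u^*,p_a)\in\mathcal{S}_{u,a}(s)$ and all $p_u$ with $(p_u,p_a^* )\in\mathcal{S}_{u,a}(s)$. Upper level: the insurer chooses $(s,T)$, $0\le s\le1$, $T\ge0$, to minimize $J_i(s,T)=\gamma(1-s)R^*+c_s(sR^*-T)$ subject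 to $T\le R^*$, $s\ge T/R^*$, $T-sR^*\ge0$, and $s>1-\frac{1}{\gamma R^*}$. A tuple $(p_u^*,p_a^*,\{s^*,T^*\})$ is a bi-level game Nash equilibrium (BGNE) if $(s^*,T^* )$ solves the insurer's problem and $(p_u^*,p_a^* )$ is an SPE of the zero-sum game at coverage level $s=s^*$. *)

(* Defs.v *)
From Stdlib Require Import Reals Lra.
Open Scope R_scope.

Definition Rstar (cu ca : R) : R := ln (cu / ca + 1).

(* Lower-level objective K(p_u,p_a,s).  When s = 1 the factor (1-s) is 0,
   so the log term is 0, matching the paper's convention. *)
Definition K (gamma cu ca pu pa s : R) : R :=
  gamma * (1 - s) * ln (pa / pu + 1) + cu * pu - ca * pa.

Definition feasible_ua (gamma s pu pa : R) : Prop :=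
  0 <= pu <= 1 /\ 0 <= pa <= 1 /\
  (s = 1 \/ (0 < pu /\ 1 - gamma * (1 - s) * ln (pa / pu + 1) > 0)).

Definition is_SPE (gamma cu ca s pu pa : R) : Prop :=
  feasible_ua gamma s pu pa /\
  (forall pa', feasible_ua gamma s pu pa' ->
     K gamma cu ca pu pa' s <= K gamma cu ca pu pa s) /\
  (forall pu', feasible_ua gamma s pu' pa ->
     K gamma cu ca pu pa s <= K gamma cu ca pu' pa s).

Definition J_ins (gamma cs Rs s T : R) : R :=
  gamma * (1 - s) * Rs + cs * (s * Rs - T).

Definition feasible_ins (gamma Rs s T : R) : Prop :=
  0 <= s <= 1 /\ 0 <= T /\ T <= Rs /\ s >= T / Rs /\ T - s * Rs >= 0 /\
  s > 1 - 1 / (gamma * Rs).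

Definition insurer_opt (gamma cs Rs s T : R) : Prop :=
  feasible_ins gamma Rs s T /\
  (forall s' T', feasible_ins gamma Rs s' T' ->
     J_ins gamma cs Rs s T <= J_ins gamma cs Rs s' T').

Definition is_BGNE (gamma cu ca cs pu pa s T : R) : Prop :=
  insurer_opt gamma cs (Rstar cu ca) s T /\ is_SPE gamma cu ca s pu pa.

(* Main.v *)
Require Import Defs.
From Stdlib Require Import Reals Lra.
Open Scope R_scope.

Theorem proposition5 (gamma cu ca cs : R) :
  0 < gamma -> 0 < cu -> 0 < ca -> 0 < cs ->
  forall pu pa s T : R,
    is_BGNE gamma cu ca cs pu pa s T <->
    (pu = 0 /\ pa = 0 /\ s = 1 /\ T = ln (cu / ca + 1)).
Proof.
  intros hg hu ha hs pu pa s T.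
  assert (hR : 0 < Rstar cu ca).
  { unfold Rstar. rewrite <- ln_1. apply ln_increasing. lra.
    assert (0 < cu / ca) by (apply Rdiv_lt_0_compat; lra). lra. }
  set (Rs := Rstar cu ca) in *.
  assert (key : forall s' T', feasible_ins gamma Rs s' T' -> T' = s' * Rs /\ s' <= 1).
  { intros s' T' (h1 & h2 & h3 & h4 & h5 & h6).
    assert (T' <= s' * Rs).
    { apply Rge_le in h4.
      assert (T' / Rs * Rs <= s' * Rs) by (apply Rmult_le_compat_r; lra).
      unfold Rdiv in H. rewrite Rmult_assoc, Rinv_l, Rmult_1_r in H; lra. }
    lra. }
  assert (feas1 : feasible_ins gamma Rs 1 Rs).
  { unfold feasible_ins. repeat split; try lra.
    - unfold Rdiv. rewrite Rinv_r; lra.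
    - assert (0 < 1 / (gamma * Rs)).
      { apply Rdiv_lt_0_compat; try lra. apply Rmult_lt_0_compat; lra. }
      lra. }
  split.
  - intros [[hf hopt] [hfe [hA hU]]].
    destruct (key _ _ hf) as [hT hs1].
    specialize (hopt 1 Rs feas1).
    unfold J_ins in hopt. subst T.
    assert (hs' : s = 1).
    { destruct hf as [[h0 h1] _].
      assert (gamma * (1 - s) * Rs <= 0).
      { replace (gamma * (1 - s) * Rs) with (gamma * (1 - s) * Rs + cs * (s * Rs - s * Rs)) by ring.
        replace 0 with (gamma * (1 - 1) * Rs + cs * (1 * Rs - Rs)) by ring. exact hopt. }
      assert (0 < gamma * Rs) by (apply Rmult_lt_0_compat; lra).
      destruct (Req_dec s 1) as [e|ne]; [exact e|].
      assert (0 < (1 - s) * (gamma * Rs)) by (apply Rmult_lt_0_compat; lra).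
      lra. }
    subst s.
    assert (fe : forall x y, 0 <= x <= 1 -> 0 <= y <= 1 -> feasible_ua gamma 1 x y).
    { intros x y hx hy. unfold feasible_ua. auto. }
    destruct hfe as [hpu [hpa _]].
    assert (z : 0 <= 0 <= 1) by lra.
    specialize (hA 0 (fe _ _ hpu z)).
    specialize (hU 0 (fe _ _ z hpa)).
    unfold K in hA, hU.
    replace (1 - 1) with 0 in hA, hU by lra.
    rewrite !Rmult_0_r, !Rmult_0_l in hA, hU.
    repeat split; try nra. unfold Rs, Rstar. ring.
  - intros (-> & -> & -> & ->).
    fold (Rstar cu ca). fold Rs.
    split.
    + split; [exact feas1|].
      intros s' T' hf. destruct (key _ _ hf) as [hT hs1]. subst T'.
      unfold J_ins. change (Rstar cu ca) with Rs. assert (0 <= gamma * Rs) by (apply Rmult_le_pos; lra).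
      assert (0 <= (1 - s') * (gamma * Rs)) by (apply Rmult_le_pos; lra).
      replace (gamma * (1 - 1) * Rs + cs * (1 * Rs - Rs)) with 0 by ring.
      replace (gamma * (1 - s') * Rs + cs * (s' * Rs - s' * Rs)) with ((1 - s') * (gamma * Rs)) by ring. lra.
    + assert (fe : forall x y, 0 <= x <= 1 -> 0 <= y <= 1 -> feasible_ua gamma 1 x y).
      { intros x y hx hy. unfold feasible_ua. auto. }
      split; [apply fe; lra|].
      unfold K. replace (1 - 1) with 0 by lra.
      split; intros p [hp1 [hp2 _]]; rewrite !Rmult_0_r, !Rmult_0_l; nra.
Qed.
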